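(* For every finite modal signature and all $q,\ell\in\mathbb{N}$ there is $c\in\mathbb{N}$ such that for any two pointed Kripke structures $\mathcal{M},w$ and $\mathcal{M}',w'$ over this signature for which $\mathcal{M}\restriction N^\ell(w),w$ and $\mathcal{M}'\restriction N^\ell(w'),w'$ are rooted tree-like: $$\mathcal{M}\restriction N^\ell(w),w\ \sim_{\mathrm{C}}^{c,\ell}\ \mathcal{M}'\restriction N^\ell(w'),w' \;\Longrightarrow\; \mathcal{M}\restriction N^\ell(w),w\ \equiv^{\mathrm{FO}_q}\ \mathcal{M}'\restriction N^\ell(w'),w'.$$ Consequently any first-order formula $\varphi(x)$ of quantifier rank at most $q$ has the same truth value at $w$ in $\mathcal{M}\restriction N^\ell(w)$ as at $w'$ in $\mathcal{M}'\restriction N^\ell(w')$.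
   Context: A finite modal signature consists of a finite set $I$ of agents and a finite set $J$ of basic propositions. A Kripke structure is $\mathcal{M}=(W,(E_i)_{i\in I},(P_j)_{j\in J})$ with $W\neq\emptyset$, $E_i\subseteq W\times W$, $P_j\subseteq W$, viewed as a relational structure; $E_i[u]=\{v:(u,v)\in E_i\}$. $\mathrm{FO}_q$ is the set of first-order formulae of quantifier rank $\le q$, and $\mathcal{M},w\equiv^{\mathrm{FO}_q}\mathcal{M}',w'$ means every $\varphi(x)\in\mathrm{FO}_q$ holds at $w$ in $\mathcal{M}$ iff it holds at $w'$ in $\mathcal{M}'$. The $\ell$-neighbourhood $N^\ell(w)$ is the set of worlds at distance $\le\ell$ from $w$ in the undirected graph given by the union of the symmetrisations of all $E_i$; $\mathcal{M}\restriction N^\ell(w)$ is the induced substructure. $\mathcal{M}\restriction N^\ell(w),w$ is rooted tree-like if, within $N^\ell(w)$, the symmetrisations of the $E_i$ are pairwise disjoint, their union is acyclic, and every $E_i$-edge is directed away from the root $w$. The $c$-graded $\ell$-round game on $\mathcal{M},\mathcal{M}'$ from $(w,w')$: positions are pairs $(u,u')\in W\times W'$. In each round from $(u,u')$, player I chooses an agent $i$ and a non-empty subset $s$ of $E_i[u]$ or of $E_i'[u']$ of size at most $c$; player II must respond with a subset $s'$ of the same size of the corresponding set on the other side; then I picks a world in $s'$ and II answers by picking a world in $s$; the pair of these two worlds is the new position. A player unable to move loses; II also loses as soon as a position $(v,v')$ (including the initial one) violates atom equivalence ($v\in P_j\not\Leftrightarrow v'\in P'_j$ for some $j$). $\mathcal{M},w\sim_{\mathrm{C}}^{c,\ell}\mathcal{M}',w'$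 means II has a winning strategy for the $\ell$ rounds of this game from $(w,w')$. *)

(* Defs.v *)
From Stdlib Require Import List Arith PeanoNat FinFun.
Import ListNotations.
Set Implicit Arguments.

Section Kripke.
Variables I J : Type.

Record Kripke := {
  world : Type;
  world_ne : inhabited world;
  rel : I -> world -> world -> Prop;
  prp : J -> world -> Prop
}.

Definition adj (M : Kripke) (u v : world M) : Prop :=
  exists i, rel M i u v \/ rel M i v u.

Fixpoint within (M : Kripke) (n : nat) (u v : world M) : Prop :=
  match n with
  | 0 => u = v
  | S m => u = v \/ exists z, adj M u z /\ within M m z v
  end.

Lemma within_refl (M : Kripke) n (u : world M) : within M n u u.
Proof. destruct n; simpl; auto. Qed.

Definition restrict (M : Kripke) (l : nat) (w : world M) : Kripke := {|
  world := { v : world M | within M l w v };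
  world_ne := inhabits (exist _ w (within_refl M l w));
  rel := fun i u v => rel M i (proj1_sig u) (proj1_sig v);
  prp := fun j u => prp M j (proj1_sig u)
|}.

Definition root (M : Kripke) (l : nat) (w : world M) : world (restrict M l w) :=
  exist _ w (within_refl M l w).

Definition dist_is (M : Kripke) (n : nat) (r v : world M) : Prop :=
  within M n r v /\ forall m, m < n -> ~ within M m r v.

Fixpoint chain (M : Kripke) (l : list (world M)) : Prop :=
  match l with
  | x :: ((y :: _) as t) => adj M x y /\ chain M t
  | _ => True
  end.

Definition acyclic (M : Kripke) : Prop :=
  (forall u, ~ adj M u u) /\
  (forall (l : list (world M)) (x y : world M),
      NoDup l -> 3 <= length l -> chain M l ->
      hd_error l = Some x -> last l x = y -> ~ adj M y x).

Definition rooted_tree_like {M : Kripke} (r : world M) : Prop :=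
  (forall i j u v, i <> j ->
     (rel M i u v \/ rel M i v u) -> (rel M j u v \/ rel M j v u) -> False) /\
  acyclic M /\
  (forall i u v, rel M i u v ->
     exists n, dist_is M n r u /\ dist_is M (S n) r v).

(** The c-graded game: [winII M M' c n u u'] means II has a winning strategy
    for n rounds from position (u,u').  Subsets of size k are duplicate-free
    lists of length k. *)
Definition subset_of (M : Kripke) (i : I) (u : world M) (s : list (world M)) :=
  NoDup s /\ forall v, In v s -> rel M i u v.

Definition atom_eq (M M' : Kripke) (u : world M) (u' : world M') : Prop :=
  forall j, prp M j u <-> prp M' j u'.

Fixpoint winII (M M' : Kripke) (c n : nat) (u : world M) (u' : world M') : Prop :=
  atom_eq M M' u u' /\
  match n with
  | 0 => True
  | S m =>
    forall i,
      (forall s, subset_of M i u s -> 1 <= length s <= c ->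
         exists s', subset_of M' i u' s' /\ length s' = length s /\
           forall v', In v' s' -> exists v, In v s /\ winII M M' c m v v') /\
      (forall s', subset_of M' i u' s' -> 1 <= length s' <= c ->
         exists s, subset_of M i u s /\ length s = length s' /\
           forall v, In v s -> exists v', In v' s' /\ winII M M' c m v v')
  end.

Definition game_equiv (c l : nat) {M : Kripke} (w : world M)
  {M' : Kripke} (w' : world M') : Prop := winII M M' c l w w'.

(** First-order logic over the signature {E_i (binary), P_j (unary), =}.
    Variables are natural numbers; the distinguished free variable x is 0. *)
Inductive fo : Type :=
| FEq : nat -> nat -> fo
| FRel : I -> nat -> nat -> fo
| FPrp : J -> nat -> fo
| FFalse : fo
| FNot : fo -> fo
| FAnd : fo -> fo -> fo
| FOr : fo -> fo -> fo
| FImp : fo -> fo -> fo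
| FEx : nat -> fo -> fo
| FAll : nat -> fo -> fo.

Fixpoint qrank (f : fo) : nat :=
  match f with
  | FEq _ _ | FRel _ _ _ | FPrp _ _ | FFalse => 0
  | FNot g => qrank g
  | FAnd g h | FOr g h | FImp g h => Nat.max (qrank g) (qrank h)
  | FEx _ g | FAll _ g => S (qrank g)
  end.

Fixpoint free_in (y : nat) (f : fo) : Prop :=
  match f with
  | FEq a b => y = a \/ y = b
  | FRel _ a b => y = a \/ y = b
  | FPrp _ a => y = a
  | FFalse => False
  | FNot g => free_in y g
  | FAnd g h | FOr g h | FImp g h => free_in y g \/ free_in y h
  | FEx x g | FAll x g => y <> x /\ free_in y g
  end.

Definition upd (W : Type) (rho : nat -> W) (x : nat) (a : W) : nat -> W :=
  fun y => if Nat.eqb y x then a else rho y.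

Fixpoint sat (M : Kripke) (rho : nat -> world M) (f : fo) : Prop :=
  match f with
  | FEq a b => rho a = rho b
  | FRel i a b => rel M i (rho a) (rho b)
  | FPrp j a => prp M j (rho a)
  | FFalse => False
  | FNot g => ~ sat M rho g
  | FAnd g h => sat M rho g /\ sat M rho h
  | FOr g h => sat M rho g \/ sat M rho h
  | FImp g h => sat M rho g -> sat M rho h
  | FEx x g => exists a, sat M (upd rho x a) g
  | FAll x g => forall a, sat M (upd rho x a) g
  end.

Definition fo_equiv (q : nat) {M : Kripke} (w : world M)
  {M' : Kripke} (w' : world M') : Prop :=
  forall f, qrank f <= q -> (forall y, free_in y f -> y = 0) ->
    (sat M (fun _ => w) f <-> sat M' (fun _ => w') f).

End Kripke.

(* Main.v *)
Require Import Defs.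
From Stdlib Require Import List Arith FinFun.
From Stdlib Require Import Lia Classical FunctionalExtensionality PropExtensionality ProofIrrelevance.
Import ListNotations.

Section W.
Variables I J : Type.
Implicit Types A B C : Kripke I J.

Lemma W_atom A B c n x y : winII A B c n x y -> atom_eq A B x y.
Proof. destruct n; simpl; tauto. Qed.

Lemma W_sym A B c n : forall x y, winII A B c n x y -> winII B A c n y x.
Proof.
  induction n as [|n IH]; simpl; intros x y [Ha H].
  - split; [intro j; split; apply Ha|exact Logic.I].
  - split; [intro j; split; apply Ha|].
    intro i; destruct (H i) as [H1 H2]; split.
    + intros s Hs Hl. destruct (H2 s Hs Hl) as (s' & Hs' & Hl' & Hm).
      exists s'; split; [exact Hs'|split; [exact Hl'|]].
      intros v' Hv'. destruct (Hm v' Hv') as (v & Hv & Hw). exists v; split; auto.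
    + intros s Hs Hl. destruct (H1 s Hs Hl) as (s' & Hs' & Hl' & Hm).
      exists s'; split; [exact Hs'|split; [exact Hl'|]].
      intros v' Hv'. destruct (Hm v' Hv') as (v & Hv & Hw). exists v; split; auto.
Qed.

Lemma W_trans A B C c n : forall x y z, winII A B c n x y -> winII B C c n y z -> winII A C c n x z.
Proof.
  induction n as [|n IH]; simpl; intros x y z [Ha H] [Hb H'].
  - split; [intro j; rewrite (Ha j); apply Hb|exact Logic.I].
  - split; [intro j; rewrite (Ha j); apply Hb|].
    intro i; destruct (H i) as [H1 H2]; destruct (H' i) as [H1' H2']; split.
    + intros s Hs Hl. destruct (H1 s Hs Hl) as (s1 & Hs1 & Hl1 & Hm1).
      destruct (H1' s1 Hs1 ltac:(rewrite Hl1; exact Hl)) as (s2 & Hs2 & Hl2 & Hm2).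
      exists s2; split; [exact Hs2|split; [congruence|]].
      intros v2 Hv2. destruct (Hm2 v2 Hv2) as (v1 & Hv1 & Hw1).
      destruct (Hm1 v1 Hv1) as (v & Hv & Hw). exists v; split; eauto.
    + intros s Hs Hl. destruct (H2' s Hs Hl) as (s1 & Hs1 & Hl1 & Hm1).
      destruct (H2 s1 Hs1 ltac:(rewrite Hl1; exact Hl)) as (s2 & Hs2 & Hl2 & Hm2).
      exists s2; split; [exact Hs2|split; [congruence|]].
      intros v2 Hv2. destruct (Hm2 v2 Hv2) as (v1 & Hv1 & Hw1).
      destruct (Hm1 v1 Hv1) as (v & Hv & Hw). exists v; split; eauto.
Qed.

Lemma W_refl A c n : forall x, winII A A c n x x.
Proof.
  induction n as [|n IH]; simpl; intros x.
  - split; [intro j; tauto|exact Logic.I].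
  - split; [intro j; tauto|]. intro i; split; intros s Hs Hl; exists s; repeat split; try apply Hs;
    intros v Hv; exists v; auto.
Qed.

Definition AtL {W : Type} (P : W -> Prop) (m : nat) : Prop :=
  exists s, NoDup s /\ length s = m /\ forall v, In v s -> P v.

Lemma AtL0 W (P : W -> Prop) : AtL P 0.
Proof. exists []; repeat split; [constructor|simpl; tauto]. Qed.

Lemma AtL_iff W (P Q : W -> Prop) m : (forall u, P u <-> Q u) -> (AtL P m <-> AtL Q m).
Proof.
  intro H; split; intros (s & H1 & H2 & H3); exists s; repeat split; auto; intros v Hv; apply H; auto.
Qed.

Lemma AtL_remove W (P : W -> Prop) z m : P z ->
  (AtL (fun u => P u /\ u <> z) m <-> AtL P (S m)).
Proof.
  intro Pz; split.
  - intros (s & H1 & H2 & H3). exists (z :: s); repeat split.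
    + constructor; auto. intro Hin. apply (H3 z Hin); reflexivity.
    + simpl; congruence.
    + intros v [<-|Hv]; [auto|apply H3; auto].
  - intros (s & H1 & H2 & H3). destruct (classic (In z s)) as [Hin|Hin].
    + destruct (in_split _ _ Hin) as (s1 & s2 & ->).
      exists (s1 ++ s2); repeat split.
      * eapply NoDup_remove_1; eauto.
      * rewrite length_app in *; simpl in H2; lia.
      * apply H3; apply in_or_app; apply in_app_or in H; simpl; tauto.
      * intro; subst. eapply NoDup_remove_2; eauto.
    + destruct s as [|x s0]; [discriminate|]. exists s0; repeat split.
      * inversion H1; auto.
      * simpl in H2; congruence.
      * apply H3; simpl; auto.
      * intro; subst. apply Hin; simpl; auto.
Qed.

Lemma AtL_noremove W (P : W -> Prop) z m : ~ P z ->
  (AtL (fun u => P u /\ u <> z) m <-> AtL P m).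
Proof.
  intro Pz; apply AtL_iff; intro u; split; [tauto|]. intros Hu; split; auto; intro; subst; auto.
Qed.

Lemma W_count A B c n x y i m (w : world A) :
  winII A B c (S n) x y -> m <= c ->
  (AtL (fun u => rel A i x u /\ winII A A c n w u) m <->
   AtL (fun u' => rel B i y u' /\ winII A B c n w u') m).
Proof.
  intros [_ H] Hm. destruct (H i) as [H1 H2]. destruct m as [|m].
  { split; intros; apply AtL0. }
  split.
  - intros (s & Hs1 & Hs2 & Hs3).
    destruct (H1 s) as (s' & [Hn' Hr'] & Hl' & Hmm).
    + split; auto. intros v Hv; apply Hs3; auto.
    + lia.
    + exists s'; split; [auto|split; [congruence|]]. intros v H0; split; [apply Hr'; auto|].
      destruct (Hmm v H0) as (v0 & Hv0 & Hw). eapply W_trans; [apply Hs3; eauto|exact Hw].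
  - intros (s & Hs1 & Hs2 & Hs3).
    destruct (H2 s) as (s' & [Hn' Hr'] & Hl' & Hmm).
    + split; auto. intros v Hv; apply Hs3; auto.
    + lia.
    + exists s'; split; [auto|split; [congruence|]]. intros v H0; split; [apply Hr'; auto|].
      destruct (Hmm v H0) as (v0 & Hv0 & Hw). eapply W_trans; [apply Hs3; eauto|]. apply W_sym; exact Hw.
Qed.
End W.
Arguments W_sym {I J A B c n x y}.
Arguments W_trans {I J A B C c n x y z}.
Arguments W_refl {I J A c n} x.
Arguments W_atom {I J A B c n x y}.

Section T.
Variables I J : Type.
Variable A : Kripke I J.

Lemma within_snoc k : forall (u v z : world A), within A k u v -> adj A v z -> within A (S k) u z.
Proof.
  induction k as [|k IH]; simpl; intros u v z H Hz.
  - subst. right. exists z; auto.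
  - destruct H as [<-|(y & Hy & Hw)].
    + right. exists z. split; [auto|apply (within_refl A (S k))].
    + right. exists y. split; auto. apply (IH y v z Hw Hz).
Qed.

Lemma within_inv_snoc k : forall (u v : world A), within A (S k) u v ->
  u = v \/ exists y, within A k u y /\ adj A y v.
Proof.
  induction k as [|k IH]; simpl; intros u v H.
  - destruct H as [H|(z & Hz & ->)]; auto. right; exists u; auto.
  - destruct H as [H|(z & Hz & Hw)]; auto.
    destruct (IH z v Hw) as [<-|(y & Hy & Hyv)].
    + right. exists u. split; [apply (within_refl A (S k))|auto].
    + right. exists y. split; [|auto]. simpl. right. exists z; auto.
Qed.

Lemma within_S k : forall (u v : world A), within A k u v -> within A (S k) u v.
Proof.
  induction k as [|k IH]; intros u v H.
  - simpl. left; exact H.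
  - change (u = v \/ exists z, adj A u z /\ within A (S k) z v).
    destruct H as [H|(z & Hz & Hw)]; [left; exact H|]. right; exists z; split; [exact Hz|apply IH; exact Hw].
Qed.

Lemma within_mono k k' (u v : world A) : k <= k' -> within A k u v -> within A k' u v.
Proof. induction 1; auto. intro; apply within_S; auto. Qed.

Lemma dist_uniq n m (r v : world A) : dist_is A n r v -> dist_is A m r v -> n = m.
Proof.
  intros [Hn Hn'] [Hm Hm']. destruct (Nat.lt_trichotomy n m) as [H|[H|H]]; auto.
  - exfalso; exact (Hm' n H Hn).
  - exfalso; exact (Hn' m H Hm).
Qed.

Lemma dist0 (r v : world A) : dist_is A 0 r v -> r = v.
Proof. intros [H _]; exact H. Qed.

Lemma dist_root (r : world A) : dist_is A 0 r r.
Proof. split; [reflexivity|intros m Hm; lia]. Qed.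

Lemma within_dist n (r v : world A) : within A n r v -> exists d, d <= n /\ dist_is A d r v.
Proof.
  induction n as [n IH] using lt_wf_ind. intro H.
  destruct (classic (exists m, m < n /\ within A m r v)) as [(m & Hm & Hw)|Hno].
  - destruct (IH m Hm Hw) as (d & Hd & Hdd). exists d; split; [lia|auto].
  - exists n; split; auto. split; auto. intros m Hm Hw; apply Hno; eauto.
Qed.

Variable ra : world A.
Hypothesis TL : rooted_tree_like ra.

Lemma edge_depth i u v d : rel A i u v -> dist_is A d ra u -> dist_is A (S d) ra v.
Proof.
  intros H Hd. destruct TL as (_ & _ & Hdir). destruct (Hdir i u v H) as (n & Hn & Hn').
  rewrite (dist_uniq _ _ _ _ Hd Hn). exact Hn'.
Qed.

Lemma edge_depth2 i u v d : rel A i u v -> dist_is A (S d) ra v -> dist_is A d ra u.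
Proof.
  intros H Hd. destruct TL as (_ & _ & Hdir). destruct (Hdir i u v H) as (n & Hn & Hn').
  pose proof (dist_uniq _ _ _ _ Hd Hn') as E. injection E as ->. exact Hn.
Qed.

Lemma noloop i u : ~ rel A i u u.
Proof.
  intro H. destruct TL as (_ & [Hl _] & _). apply (Hl u). exists i; auto.
Qed.

Lemma agent_uniq i j u v : rel A i u v -> rel A j u v -> i = j.
Proof.
  intros H1 H2. destruct TL as (Hd & _ & _). apply NNPP; intro Hne.
  exact (Hd i j u v Hne (or_introl H1) (or_introl H2)).
Qed.

Lemma parent d v : dist_is A (S d) ra v -> exists i p, rel A i p v /\ dist_is A d ra p.
Proof.
  intros Hv. destruct Hv as [Hw Hmin] eqn:E.
  destruct (within_inv_snoc d _ _ Hw) as [<-|(y & Hy & Hyv)].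
  - exfalso. apply (Hmin 0); [lia|reflexivity].
  - destruct Hyv as (i & [Hr|Hr]).
    + exists i, y. split; auto. eapply edge_depth2; eauto.
    + exfalso. pose proof (edge_depth i v y (S d) Hr Hv) as Hy2.
      destruct Hy2 as [_ Hm]. apply (Hm d); [lia|auto].
Qed.

Lemma last_indep (x : world A) t d1 d2 : last (x :: t) d1 = last (x :: t) d2.
Proof.
  revert x; induction t as [|y t IH]; intros x; simpl; auto.
  specialize (IH y). simpl in IH. destruct t; auto.
Qed.

Lemma chain_snoc (L : list (world A)) x y : chain A L -> L <> [] -> adj A (last L x) y -> chain A (L ++ [y]).
Proof.
  induction L as [|a L IH]; intros Hc Hne Ha; [congruence|].
  destruct L as [|b L].
  - simpl in *. auto.
  - simpl in Hc. destruct Hc as [Hab Hc]. change (chain A (a :: ((b :: L) ++ [y]))).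
    simpl. split; auto. apply IH; auto; congruence.
Qed.

Lemma adj_of_rel i u v : rel A i u v -> adj A u v /\ adj A v u.
Proof. intros H; split; exists i; auto. Qed.

Lemma chainL n : forall (u1 u2 : world A), dist_is A n ra u1 -> dist_is A n ra u2 -> u1 <> u2 ->
  exists L, NoDup L /\ 2 <= length L /\ chain A L /\ hd_error L = Some u1 /\ last L u1 = u2 /\
    (forall x, In x L -> exists m, m <= n /\ dist_is A m ra x).
Proof.
  induction n as [|n IH]; intros u1 u2 H1 H2 Hne.
  - apply dist0 in H1; apply dist0 in H2; congruence.
  - destruct (parent _ _ H1) as (i1 & p1 & Hr1 & Hp1).
    destruct (parent _ _ H2) as (i2 & p2 & Hr2 & Hp2).
    assert (Hd : forall x m, dist_is A m ra x -> m <= n -> x <> u1 /\ x <> u2).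
    { intros x m Hx Hm; split; intros ->.
      - pose proof (dist_uniq _ _ _ _ Hx H1); lia.
      - pose proof (dist_uniq _ _ _ _ Hx H2); lia. }
    destruct (classic (p1 = p2)) as [E|Hp]; [subst p2|].
    + exists [u1; p1; u2]. destruct (Hd p1 n Hp1 (le_n _)) as [Hq1 Hq2].
      repeat split.
      * constructor; [simpl; intros [?|[?|[]]]; congruence|].
        constructor; [simpl; intros [?|[]]; congruence|]. constructor; [simpl; tauto|constructor].
      * simpl; lia.
      * apply (adj_of_rel _ _ _ Hr1).
      * apply (adj_of_rel _ _ _ Hr2).
      * intros x [<-|[<-|[<-|[]]]]; [exists (S n)|exists n|exists (S n)]; split; auto.
    + destruct (IH p1 p2 Hp1 Hp2 Hp) as (L & HN & Hlen & Hc & Hh & Hl & Hdep).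
      destruct L as [|a L]; [discriminate|]. simpl in Hh. injection Hh as Eh; subst a.
      exists (u1 :: (p1 :: L) ++ [u2]). split; [|split; [|split; [|split; [|split]]]].
      * constructor.
        -- intro Hin. apply in_app_or in Hin. destruct Hin as [Hin|[Hin|[]]]; [|congruence].
           destruct (Hdep _ Hin) as (m & Hm & Hx). destruct (Hd _ _ Hx Hm); congruence.
        -- apply NoDup_app; auto. { constructor; [simpl; tauto|constructor]. }
           intros x Hin [<-|[]]. destruct (Hdep _ Hin) as (m & Hm & Hx). destruct (Hd _ _ Hx Hm); congruence.
      * simpl. rewrite length_app. simpl; lia.
      * change (chain A ((u1 :: p1 :: L) ++ [u2])). apply (chain_snoc _ u1).
        -- simpl. split; [apply (adj_of_rel _ _ _ Hr1)|exact Hc].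
        -- congruence.
        -- change (last (u1 :: p1 :: L) u1) with (last (p1 :: L) u1).
           rewrite (last_indep p1 L u1 p1), Hl. apply (adj_of_rel _ _ _ Hr2).
      * reflexivity.
      * change (last ((u1 :: p1 :: L) ++ [u2]) u1 = u2). apply last_last.
      * intros x Hin. destruct Hin as [<-|Hin]; [exists (S n); auto|].
        apply in_app_or in Hin. destruct Hin as [Hin|[<-|[]]].
        -- destruct (Hdep _ Hin) as (m & Hm & Hx). exists m; split; auto.
        -- exists (S n); auto.
Qed.

Lemma uniq_parent i j p q v : rel A i p v -> rel A j q v -> p = q.
Proof.
  intros Hp Hq. apply NNPP; intro Hne.
  destruct TL as (_ & [_ Hac] & Hdir).
  destruct (Hdir i p v Hp) as (d & Hd & Hv).
  pose proof (edge_depth2 j q v d Hq Hv) as Hdq.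
  destruct (chainL d p q Hd Hdq Hne) as (L & HN & Hlen & Hc & Hh & Hl & Hdep).
  destruct L as [|a L]; [discriminate|]. simpl in Hh. injection Hh as Eh; subst a.
  apply (Hac (v :: p :: L) v q).
  - constructor; auto. intro Hin. destruct (Hdep _ Hin) as (m & Hm & Hx).
    pose proof (dist_uniq _ _ _ _ Hx Hv). lia.
  - simpl in *; lia.
  - simpl. split; [apply (adj_of_rel _ _ _ Hp)|exact Hc].
  - reflexivity.
  - change (last (p :: L) v = q). rewrite (last_indep p L v p). exact Hl.
  - apply (adj_of_rel _ _ _ Hq).
Qed.

End T.
Arguments dist_uniq {I J A n m r v}.
Arguments dist0 {I J A r v}.
Arguments dist_root {I J A} r.
Arguments edge_depth {I J A ra} TL {i u v d}.
Arguments edge_depth2 {I J A ra} TL {i u v d}.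
Arguments noloop {I J A ra} TL {i u}.
Arguments agent_uniq {I J A ra} TL {i j u v}.
Arguments parent {I J A ra} TL {d v}.
Arguments uniq_parent {I J A ra} TL {i j p q v}.
Arguments within_dist {I J A n r v}.
Arguments within_snoc {I J A k u v z}.
Arguments within_mono {I J A k k' u v}.

Section InvS.
Variables I J : Type.
Variables c l : nat.

Definition TreeOK (A : Kripke I J) (ra : world A) :=
  rooted_tree_like ra /\ forall v, exists d, d <= l /\ dist_is A d ra v.

Definition fl {X Y : Type} (R : X -> Y -> Prop) : Y -> X -> Prop := fun y x => R x y.
Definition ext {X Y : Type} (R : X -> Y -> Prop) (z : X) (z' : Y) : X -> Y -> Prop :=
  fun a b => R a b \/ (a = z /\ b = z').

Definition Cnt (A B : Kripke I J) (R : world A -> world B -> Prop) x y n t :=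
  forall i m (w : world A), m <= t ->
   (AtL (fun u => rel A i x u /\ ~(exists v, R u v) /\ winII A A c n w u) m <->
    AtL (fun u' => rel B i y u' /\ ~(exists v, R v u') /\ winII A B c n w u') m).

Definition Half (A B : Kripke I J) ra rb (R : world A -> world B -> Prop) t :=
  (forall x y y2, R x y -> R x y2 -> y = y2) /\ R ra rb /\
  (forall x y i p, R x y -> rel A i p x -> exists p', R p p') /\
  (forall x y, R x y -> exists d, dist_is A d ra x /\ dist_is B d rb y /\
      winII A B c (l - d) x y /\ Cnt A B R x y (l - S d) t) /\
  (forall x y u v i, R x y -> R u v -> rel A i x u -> rel B i y v).

Definition Inv (A B : Kripke I J) ra rb R t := Half A B ra rb R t /\ Half B A rb ra (fl R) t.

Lemma Inv_sym A B ra rb R t : Inv A B ra rb R t -> Inv B A rb ra (fl R) t.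
Proof. intros [H1 H2]; split; [exact H2|exact H1]. Qed.

Lemma Cnt_mono A B R x y n t t' : t <= t' -> Cnt A B R x y n t' -> Cnt A B R x y n t.
Proof. intros Ht H i m w Hm; apply H; lia. Qed.

Lemma Half_mono A B ra rb R t t' : t <= t' -> Half A B ra rb R t' -> Half A B ra rb R t.
Proof.
  intros Ht (H1 & H2 & H3 & H4 & H5); split; [exact H1|split; [exact H2|split; [exact H3|split; [|exact H5]]]].
  intros x y Hxy; destruct (H4 x y Hxy) as (d & ? & ? & ? & ?); exists d.
  split; [auto|split; [auto|split; [auto|]]]. eapply Cnt_mono; eauto.
Qed.

Lemma Inv_mono A B ra rb R t t' : t <= t' -> Inv A B ra rb R t' -> Inv A B ra rb R t.
Proof. intros Ht [H1 H2]; split; eapply Half_mono; eauto. Qed.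

Lemma no_child A ra (TA : TreeOK A ra) d x i u : l < S d -> dist_is A d ra x -> ~ rel A i x u.
Proof.
  intros Hl Hd Hr. destruct TA as [TL DA].
  pose proof (edge_depth TL Hr Hd) as Hu.
  destruct (DA u) as (d' & Hd' & Hu'). pose proof (dist_uniq Hu Hu'). lia.
Qed.

Lemma Cnt_fresh A B ra rb (TA : TreeOK A ra) (TB : TreeOK B rb) R x y d t :
  dist_is A d ra x -> dist_is B d rb y -> winII A B c (l - d) x y -> t <= c ->
  (forall i u, rel A i x u -> ~ exists v, R u v) ->
  (forall i u', rel B i y u' -> ~ exists v, R v u') ->
  Cnt A B R x y (l - S d) t.
Proof.
  intros Hx Hy Hw Ht Fx Fy i m w Hm.
  destruct (le_lt_dec (S d) l) as [Hle|Hlt].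
  - replace (l - d) with (S (l - S d)) in Hw by lia.
    rewrite (AtL_iff _ _ (fun u => rel A i x u /\ winII A A c (l - S d) w u)).
    2:{ intro u; split; [tauto|]. intros [H1 H2]; repeat split; auto. apply (Fx i u H1). }
    rewrite (AtL_iff _ _ (fun u => rel B i y u /\ winII A B c (l - S d) w u) m).
    2:{ intro u; split; [tauto|]. intros [H1 H2]; repeat split; auto. apply (Fy i u H1). }
    apply W_count; auto; lia.
  - destruct m as [|m]; [split; intros; apply AtL0|].
    split; intros (s & _ & Hl & Hs); destruct s as [|u s]; try discriminate;
      destruct (Hs u (or_introl eq_refl)) as [Hr _]; exfalso.
    + exact (no_child A ra TA d x i u Hlt Hx Hr).
    + exact (no_child B rb TB d y i u Hlt Hy Hr).
Qed.

Lemma fl_ext (X Y : Type) (R : X -> Y -> Prop) z z' : fl (ext R z z') = ext (fl R) z' z.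
Proof.
  apply functional_extensionality; intro b; apply functional_extensionality; intro a.
  unfold fl, ext. apply propositional_extensionality; tauto.
Qed.

End InvS.
Arguments TreeOK {I J} l A ra.
Arguments Cnt {I J} c A B R x y n t.
Arguments Half {I J} c l A B ra rb R t.
Arguments Inv {I J} c l A B ra rb R t.
Arguments Cnt_fresh {I J} c l A B ra rb TA TB R x y d t.
Arguments Inv_sym {I J c l A B ra rb R t}.

Section Ext.
Variables I J : Type.
Variables c l : nat.

Lemma Cnt_upd (A B : Kripke I J) ra rb (TA : TreeOK l A ra) (TB : TreeOK l B rb) R t p p' z z' i dp x y d :
  Half c l A B ra rb R (S t) -> Half c l B A rb ra (fl R) (S t) ->
  R p p' -> dist_is A dp ra p -> rel A i p z -> rel B i p' z' ->
  ~ (exists v, R z v) -> ~ (exists v, R v z') -> winII A B c (l - S dp) z z' ->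
  R x y -> dist_is A d ra x -> Cnt c A B R x y (l - S d) (S t) ->
  Cnt c A B (ext R z z') x y (l - S d) t.
Proof.
  intros HA HB Hpp Hdp Hz Hz' Fz Fz' Hw Hxy Hd Hc j m w Hm.
  destruct HA as (F & _ & _ & _ & _). destruct HB as (F' & _ & _ & _ & _).
  destruct TA as [TLA _]. destruct TB as [TLB _].
  set (P := fun u => rel A j x u /\ ~(exists v, R u v) /\ winII A A c (l - S d) w u).
  set (Q := fun u' => rel B j y u' /\ ~(exists v, R v u') /\ winII A B c (l - S d) w u').
  rewrite (AtL_iff _ _ (fun u => P u /\ u <> z) m).
  2:{ intro u; unfold P, ext; split.
      - intros (H1 & H2 & H3); split; [split; [exact H1|split; [|exact H3]]|].
        + intros (v & Hv); apply H2; exists v; left; exact Hv.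
        + intros ->; apply H2; exists z'; right; auto.
      - intros ((H1 & H2 & H3) & H4); split; [exact H1|split; [|exact H3]].
        intros (v & [Hv|[Hv _]]); [apply H2; eauto|congruence]. }
  rewrite (AtL_iff _ _ (fun u => Q u /\ u <> z') m).
  2:{ intro u; unfold Q, ext; split.
      - intros (H1 & H2 & H3); split; [split; [exact H1|split; [|exact H3]]|].
        + intros (v & Hv); apply H2; exists v; left; exact Hv.
        + intros ->; apply H2; exists z; right; auto.
      - intros ((H1 & H2 & H3) & H4); split; [exact H1|split; [|exact H3]].
        intros (v & [Hv|[_ Hv]]); [apply H2; eauto|congruence]. }
  assert (HPQ : P z <-> Q z').
  { unfold P, Q; split.
    - intros (H1 & H2 & H3).
      pose proof (uniq_parent TLA H1 Hz) as ->.
      pose proof (agent_uniq TLA H1 Hz) as ->.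
      pose proof (F _ _ _ Hxy Hpp) as ->.
      pose proof (dist_uniq Hd Hdp) as ->.
      split; [exact Hz'|split; [exact Fz'|]]. exact (W_trans H3 Hw).
    - intros (H1 & H2 & H3).
      pose proof (uniq_parent TLB H1 Hz') as ->.
      pose proof (F' _ _ _ Hxy Hpp) as ->.
      pose proof (agent_uniq TLB H1 Hz') as ->.
      pose proof (dist_uniq Hd Hdp) as ->.
      split; [exact Hz|split; [exact Fz|]]. exact (W_trans H3 (W_sym Hw)). }
  destruct (classic (P z)) as [HPz|HPz].
  - rewrite (AtL_remove _ P z m HPz), (AtL_remove _ Q z' m (proj1 HPQ HPz)).
    apply Hc; lia.
  - rewrite (AtL_noremove _ P z m HPz).
    rewrite (AtL_noremove _ Q z' m (fun H => HPz (proj2 HPQ H))).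
    apply Hc; lia.
Qed.

Lemma HalfExt (A B : Kripke I J) ra rb (TA : TreeOK l A ra) (TB : TreeOK l B rb) R t p p' z z' i dp :
  Half c l A B ra rb R (S t) -> Half c l B A rb ra (fl R) (S t) -> t <= c ->
  R p p' -> dist_is A dp ra p -> dist_is B dp rb p' -> rel A i p z -> rel B i p' z' ->
  ~ (exists v, R z v) -> ~ (exists v, R v z') -> winII A B c (l - S dp) z z' ->
  Half c l A B ra rb (ext R z z') t.
Proof.
  intros HA HB Ht Hpp Hdp Hdp' Hz Hz' Fz Fz' Hw.
  pose proof HA as HA0. pose proof HB as HB0.
  destruct HA as (F & Rt & Anc & H4 & E). destruct HB as (F' & Rt' & Anc' & H4' & E').
  pose proof TA as TA0. pose proof TB as TB0.
  destruct TA as [TLA _]. destruct TB as [TLB _].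
  unfold ext. split; [|split; [|split; [|split]]].
  - intros x y y2 [H|[-> ->]] [H'|[Ex ->]].
    + eauto.
    + subst x. exfalso; apply Fz; eauto.
    + exfalso; apply Fz; eauto.
    + reflexivity.
  - left; exact Rt.
  - intros x y j q [H|[-> ->]] Hq.
    + destruct (Anc x y j q H Hq) as (q' & Hq'). exists q'; left; exact Hq'.
    + pose proof (uniq_parent TLA Hq Hz) as ->. exists p'; left; exact Hpp.
  - intros x y [H|[-> ->]].
    + destruct (H4 x y H) as (d & Hd & Hd' & Hwx & Hc). exists d.
      split; [exact Hd|split; [exact Hd'|split; [exact Hwx|]]].
      exact (Cnt_upd A B ra rb TA0 TB0 R t p p' z z' i dp x y d HA0 HB0 Hpp Hdp Hz Hz' Fz Fz' Hw H Hd Hc).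
    + exists (S dp). pose proof (edge_depth TLA Hz Hdp) as Hdz. pose proof (edge_depth TLB Hz' Hdp') as Hdz'.
      split; [exact Hdz|split; [exact Hdz'|split; [exact Hw|]]].
      apply (Cnt_fresh c l A B ra rb TA0 TB0 _ z z' (S dp) t Hdz Hdz' Hw Ht).
      * intros j u Hu (v & [Hv|[-> _]]).
        -- destruct (Anc u v j z Hv Hu) as (q & Hq). apply Fz; eauto.
        -- exact (noloop TLA Hu).
      * intros j u Hu (v & [Hv|[_ ->]]).
        -- destruct (Anc' u v j z' Hv Hu) as (q & Hq). apply Fz'; exists q; exact Hq.
        -- exact (noloop TLB Hu).
  - intros x y u v j [H|[-> ->]] [H'|[-> ->]] Hr.
    + eauto.
    + pose proof (uniq_parent TLA Hr Hz) as ->. pose proof (agent_uniq TLA Hr Hz) as ->.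
      pose proof (F _ _ _ H Hpp) as ->. exact Hz'.
    + destruct (Anc u v j z H' Hr) as (q & Hq). exfalso; apply Fz; eauto.
    + exfalso; exact (noloop TLA Hr).
Qed.

Lemma step (A B : Kripke I J) ra rb (TA : TreeOK l A ra) (TB : TreeOK l B rb) R t p p' i z :
  Inv c l A B ra rb R (S t) -> t <= c -> R p p' -> rel A i p z -> ~ (exists v, R z v) ->
  exists z', Inv c l A B ra rb (ext R z z') t.
Proof.
  intros [HA HB] Ht Hpp Hz Fz.
  pose proof HA as (_ & _ & _ & H4 & _).
  destruct (H4 p p' Hpp) as (dp & Hdp & Hdp' & Hw & Hc).
  destruct (proj1 (Hc i 1 z ltac:(lia))) as (s & Hs1 & Hs2 & Hs3).
  { exists [z]. split; [constructor; [simpl; tauto|constructor]|split; [reflexivity|]].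
    intros v [<-|[]]. split; [exact Hz|split; [exact Fz|apply W_refl]]. }
  destruct s as [|z' s]; [discriminate|].
  destruct (Hs3 z' (or_introl eq_refl)) as (Hz' & Fz' & Hwz).
  exists z'. split.
  - exact (HalfExt A B ra rb TA TB R t p p' z z' i dp HA HB Ht Hpp Hdp Hdp' Hz Hz' Fz Fz' Hwz).
  - rewrite fl_ext.
    exact (HalfExt B A rb ra TB TA (fl R) t p' p z' z i dp HB HA Ht Hpp Hdp' Hdp Hz' Hz Fz' Fz (W_sym Hwz)).
Qed.

Lemma path (A B : Kripke I J) ra rb (TA : TreeOK l A ra) (TB : TreeOK l B rb) :
  forall d t R a, t + d <= c -> dist_is A d ra a -> Inv c l A B ra rb R (t + d) ->
  exists R' a', (forall x y, R x y -> R' x y) /\ R' a a' /\ Inv c l A B ra rb R' t.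
Proof.
  pose proof TA as [TLA _].
  induction d as [|d IH]; intros t R a Hc Hd HI.
  - apply dist0 in Hd. subst a. rewrite Nat.add_0_r in HI.
    exists R, rb. split; [auto|split; [|exact HI]]. destruct HI as ((_ & Rt & _) & _). exact Rt.
  - destruct (parent TLA Hd) as (i & p & Hr & Hp).
    destruct (IH (S t) R p ltac:(lia) Hp ltac:(replace (S t + d) with (t + S d) by lia; exact HI))
      as (R1 & p' & Hsub & H1 & HI1).
    destruct (classic (exists v, R1 a v)) as [(a' & Ha')|Hn].
    + exists R1, a'. split; [exact Hsub|split; [exact Ha'|]]. eapply Inv_mono; [|exact HI1]; lia.
    + destruct (step A B ra rb TA TB R1 t p p' i a HI1 ltac:(lia) H1 Hr Hn) as (z' & HI2).
      exists (ext R1 a z'), z'. split; [intros x y H; left; auto|split; [right; auto|exact HI2]].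
Qed.

End Ext.
Arguments path {I J} c l A B ra rb TA TB d t R a.

Section Main.
Variables I J : Type.
Variables c l : nat.

Lemma no_parent_root (A : Kripke I J) ra (TL : rooted_tree_like ra) i p : ~ rel A i p ra.
Proof.
  intro H. destruct TL as (_ & _ & Hdir). destruct (Hdir i p ra H) as (n & _ & Hn).
  pose proof (dist_uniq Hn (dist_root ra)). lia.
Qed.

Lemma Half_init (A B : Kripke I J) ra rb (TA : TreeOK l A ra) (TB : TreeOK l B rb) R t :
  (forall a b, R a b <-> a = ra /\ b = rb) -> winII A B c l ra rb -> t <= c ->
  Half c l A B ra rb R t.
Proof.
  intros HR Hw Ht. pose proof TA as [TLA _]. pose proof TB as [TLB _].
  split; [|split; [|split; [|split]]].
  - intros x y y2 H1 H2. apply HR in H1; apply HR in H2. destruct H1, H2; congruence.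
  - apply HR; auto.
  - intros x y i p H Hp. apply HR in H. destruct H as [-> _]. exfalso; exact (no_parent_root A ra TLA i p Hp).
  - intros x y H. apply HR in H. destruct H as [-> ->]. exists 0.
    split; [apply dist_root|split; [apply dist_root|]].
    rewrite Nat.sub_0_r. split; [exact Hw|].
    apply (Cnt_fresh c l A B ra rb TA TB R ra rb 0 t (dist_root ra) (dist_root rb)); [rewrite Nat.sub_0_r; exact Hw|exact Ht| |].
    + intros i u Hu (v & Hv). apply HR in Hv. destruct Hv as [-> _]. exact (noloop TLA Hu).
    + intros i u Hu (v & Hv). apply HR in Hv. destruct Hv as [_ ->]. exact (noloop TLB Hu).
  - intros x y u v i H1 H2 Hr. apply HR in H1; apply HR in H2. destruct H1 as [-> _]; destruct H2 as [-> _].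
    exfalso; exact (noloop TLA Hr).
Qed.

Lemma upd_rel (A B : Kripke I J) (R : world A -> world B -> Prop) rho rho' n a a' :
  (forall v, R (rho v) (rho' v)) -> R a a' -> forall v, R (upd rho n a v) (upd rho' n a' v).
Proof. intros H Ha v. unfold upd. destruct (Nat.eqb v n); auto. Qed.

Lemma fo_main (A B : Kripke I J) ra rb (TA : TreeOK l A ra) (TB : TreeOK l B rb) :
  forall f k R rho rho', qrank f <= k -> k * l <= c -> Inv c l A B ra rb R (k * l) ->
  (forall v, R (rho v) (rho' v)) -> (sat A rho f <-> sat B rho' f).
Proof.
  induction f as [a b|i a b|j a| |f IH|f IH g IH'|f IH g IH'|f IH g IH'|x f IH|x f IH];
    intros k R rho rho' Hq Hc HI Hr; simpl in *.
  - destruct HI as ((F & _) & (F' & _)). split; intro E.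
    + pose proof (Hr a) as Ha. rewrite E in Ha. exact (F _ _ _ Ha (Hr b)).
    + pose proof (Hr a) as Ha. rewrite E in Ha. exact (F' _ _ _ Ha (Hr b)).
  - destruct HI as ((_ & _ & _ & _ & E) & (_ & _ & _ & _ & E')). split; intro H.
    + exact (E _ _ _ _ _ (Hr a) (Hr b) H).
    + exact (E' _ _ _ _ _ (Hr a) (Hr b) H).
  - destruct HI as ((_ & _ & _ & H4 & _) & _). destruct (H4 _ _ (Hr a)) as (d & _ & _ & Hw & _).
    apply (W_atom Hw).
  - tauto.
  - rewrite (IH k R rho rho' Hq Hc HI Hr). tauto.
  - rewrite (IH k R rho rho' ltac:(lia) Hc HI Hr), (IH' k R rho rho' ltac:(lia) Hc HI Hr). tauto.
  - rewrite (IH k R rho rho' ltac:(lia) Hc HI Hr), (IH' k R rho rho' ltac:(lia) Hc HI Hr). tauto.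
  - rewrite (IH k R rho rho' ltac:(lia) Hc HI Hr), (IH' k R rho rho' ltac:(lia) Hc HI Hr). tauto.
  - destruct k as [|k]; [lia|]. pose proof TA as [_ DA]. pose proof TB as [_ DB]. split.
    + intros (a & Ha). destruct (DA a) as (d & Hd & Hda).
      destruct (path c l A B ra rb TA TB d (k * l) R a ltac:(simpl in Hc; lia) Hda
                 ltac:(eapply Inv_mono; [|exact HI]; simpl; lia)) as (R' & a' & Hsub & Ha' & HI').
      exists a'. apply (proj1 (IH k R' _ _ ltac:(lia) ltac:(simpl in Hc; lia) HI' (upd_rel A B R' rho rho' x a a' (fun v => Hsub _ _ (Hr v)) Ha'))).
      exact Ha.
    + intros (a' & Ha'). destruct (DB a') as (d & Hd & Hda).
      destruct (path c l B A rb ra TB TA d (k * l) (fl R) a' ltac:(simpl in Hc; lia) Hda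
                 ltac:(eapply Inv_mono; [|exact (Inv_sym HI)]; simpl; lia)) as (R' & a & Hsub & Ha & HI').
      exists a. apply (proj2 (IH k (fl R') _ _ ltac:(lia) ltac:(simpl in Hc; lia) (Inv_sym HI') (upd_rel A B (fl R') rho rho' x a a' (fun v => Hsub _ _ (Hr v)) Ha))).
      exact Ha'.
  - destruct k as [|k]; [lia|]. pose proof TA as [_ DA]. pose proof TB as [_ DB]. split.
    + intros H a'. destruct (DB a') as (d & Hd & Hda).
      destruct (path c l B A rb ra TB TA d (k * l) (fl R) a' ltac:(simpl in Hc; lia) Hda
                 ltac:(eapply Inv_mono; [|exact (Inv_sym HI)]; simpl; lia)) as (R' & a & Hsub & Ha & HI').
      apply (proj1 (IH k (fl R') _ _ ltac:(lia) ltac:(simpl in Hc; lia) (Inv_sym HI') (upd_rel A B (fl R') rho rho' x a a' (fun v => Hsub _ _ (Hr v)) Ha))).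
      apply H.
    + intros H a. destruct (DA a) as (d & Hd & Hda).
      destruct (path c l A B ra rb TA TB d (k * l) R a ltac:(simpl in Hc; lia) Hda
                 ltac:(eapply Inv_mono; [|exact HI]; simpl; lia)) as (R' & a' & Hsub & Ha' & HI').
      apply (proj2 (IH k R' _ _ ltac:(lia) ltac:(simpl in Hc; lia) HI' (upd_rel A B R' rho rho' x a a' (fun v => Hsub _ _ (Hr v)) Ha'))).
      apply H.
Qed.

End Main.
Arguments fo_main {I J} c l A B ra rb TA TB f k R rho rho'.
Arguments Half_init {I J} c l A B ra rb TA TB R t.

Lemma core I J l (A B : Kripke I J) ra rb (TA : TreeOK l A ra) (TB : TreeOK l B rb) q :
  winII A B (q * l) l ra rb -> fo_equiv q ra rb.
Proof.
  intros Hw f Hq _.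
  set (R0 := fun (a : world A) (b : world B) => a = ra /\ b = rb).
  assert (HI : Inv (q * l) l A B ra rb R0 (q * l)).
  { split.
    - apply (Half_init (q*l) l A B ra rb TA TB R0 (q*l)); [unfold R0; tauto|exact Hw|lia].
    - apply (Half_init (q*l) l B A rb ra TB TA (fl R0) (q*l)); [unfold fl, R0; tauto|exact (W_sym Hw)|lia]. }
  apply (fo_main (q*l) l A B ra rb TA TB f q R0 (fun _ => ra) (fun _ => rb) Hq (le_n _) HI).
  intro v; unfold R0; auto.
Qed.

Lemma lift I J (M : Kripke I J) l w : forall n (u v : world M), within M n u v ->
  forall k, within M k w u -> k + n <= l -> forall hu hv,
  within (restrict M l w) n (exist _ u hu) (exist _ v hv).
Proof.
  induction n as [|n IH]; intros u v H k Hk Hkn hu hv.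
  - simpl in H; subst v. simpl. f_equal. apply proof_irrelevance.
  - simpl in H. destruct H as [<-|(z & Hz & Hw)].
    + simpl; left; f_equal; apply proof_irrelevance.
    + assert (hz : within M l w z) by (apply (within_mono (k := S k)); [lia|exact (within_snoc Hk Hz)]).
      simpl. right. exists (exist _ z hz). split.
      * destruct Hz as (i & Hi). exists i. exact Hi.
      * apply (IH z v Hw (S k)); [exact (within_snoc Hk Hz)|lia].
Qed.

Lemma treeOK_restrict I J (M : Kripke I J) l w :
  rooted_tree_like (root M l w) -> TreeOK l (restrict M l w) (root M l w).
Proof.
  intro T; split; [exact T|]. intros [v hv].
  pose proof (lift I J M l w l w v hv 0 (eq_refl) ltac:(lia) (within_refl M l w) hv) as H.
  destruct (within_dist H) as (d & Hd & Hdd). exists d; split; auto.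
Qed.

Theorem mainTheorem8 :
  forall (I J : Type), Finite I -> Finite J ->
  forall q l : nat, exists c : nat,
  forall (M M' : Kripke I J) (w : world M) (w' : world M'),
    rooted_tree_like (root M l w) ->
    rooted_tree_like (root M' l w') ->
    game_equiv c l (root M l w) (root M' l w') ->
    fo_equiv q (root M l w) (root M' l w').
Proof.
  intros I J _ _ q l. exists (q * l). intros M M' w w' T1 T2 G.
  apply (core I J l _ _ _ _ (treeOK_restrict I J M l w T1) (treeOK_restrict I J M' l w' T2) q G).
Qed.
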